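(* Let $D$ be a strongly connected digraph, $T$ a DFS tree of $D$ rooted at $r$ of length $t\ge 1$ with levels $V_0,\ldots,V_t$, and let $G^D$ be the backward spine of $D$ relative to $T$. If $c'$ is a proper coloring of $G^D$ with $\chi(G^D)$ colors, then the map $c$ on $V(D)$ defined by $c(v)=c'(V_i)$ for $v\in V_i$ is an acyclic coloring of $D$. In particular, $\chi_A(D)\le\chi(G^D)$.
   Context: Digraphs are finite and loopless; paths and cycles are directed; $l(\cdot)$ denotes length. A DFS tree $T$ of a strongly connected digraph $D$ rooted at $r$ is the spanning out-branching produced by a depth-first search started at $r$. $P_u$ is the unique $ru$-path in $T$; the length $t$ of $T$ is the length of a longest path in $T$; the levels are $V_i=\{u: l(P_u)=i\}$, $0\le i\le t$. A vertex $u$ is a descendant of $v$ if $T$ has a $vu$-path; an arc $(u,v)$ is a backward arc if $u$ is a descendant of $v$. The backward spine $G^D$ is the undirected graph with vertex set $\{V_0,\ldots,V_t\}$ in which, for $i>j$, $V_iV_j$ is an edge iff there is a backward arc $(u,v)$ with $u\in V_i$, $v\in V_j$. An acyclic coloring is a coloring whose color classes induce no directed cycle; $\chi_A$ is the minimum number of colors in such a coloring. *)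

(* Defs.v *)
From Stdlib Require Import Relations.
From mathcomp Require Import all_boot.
Set Implicit Arguments. Unset Strict Implicit. Unset Printing Implicit Defensive.

Definition loopless (V : finType) (e : rel V) := irreflexive e.
Definition strongly_connected (V : finType) (e : rel V) := forall u v, connect e u v.

(* Depth-first search, modeled operationally: a state is
   (stack (top first), visited set, set of tree arcs). *)
Definition dfs_state (V : finType) := (seq V * {set V} * {set V * V})%type.

Inductive dfs_step (V : finType) (e : rel V) : dfs_state V -> dfs_state V -> Prop :=
| dfs_discover u s (vis : {set V}) (A : {set V * V}) w :
    e u w -> w \notin vis ->
    dfs_step e (u :: s, vis, A) (w :: u :: s, w |: vis, (u, w) |: A)
| dfs_retreat u s (vis : {set V}) (A : {set V * V}) :
    (forall w, e u w -> w \in vis) ->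
    dfs_step e (u :: s, vis, A) (s, vis, A).

Definition dfs_tree (V : finType) (e : rel V) (r : V) (T : {set V * V}) :=
  exists vis : {set V}, clos_refl_trans _ (@dfs_step V e)
                ([:: r], [set r], set0) ([::], vis, T).

Definition tarc (V : finType) (T : {set V * V}) : rel V := fun x y => (x, y) \in T.

Definition tree_length (V : finType) (T : {set V * V}) (t : nat) :=
  (exists x (p : seq V), path (tarc T) x p /\ size p = t) /\
  (forall x (p : seq V), path (tarc T) x p -> size p <= t).

Definition in_level (V : finType) (T : {set V * V}) (r : V) (i : nat) (u : V) :=
  exists p : seq V, path (tarc T) r p /\ last r p = u /\ size p = i.

Definition descendant (V : finType) (T : {set V * V}) (u v : V) :=
  connect (tarc T) v u.

Definition backward_arc (V : finType) (e : rel V) (T : {set V * V}) (u v : V) :=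
  e u v /\ descendant T u v.

Definition backward_spine (V : finType) (e : rel V) (T : {set V * V}) (r : V)
  (t : nat) (i j : 'I_t.+1) : Prop :=
  exists u v, backward_arc e T u v /\
    ((j < i /\ in_level T r i u /\ in_level T r j v) \/
     (i < j /\ in_level T r j u /\ in_level T r i v)).

Definition proper_coloring (I : finType) (E : I -> I -> Prop) (k : nat)
  (c : I -> 'I_k) := forall i j, E i j -> c i <> c j.

Definition chromatic_number (I : finType) (E : I -> I -> Prop) (k : nat) :=
  (exists c : I -> 'I_k, proper_coloring E c) /\
  (forall m, m < k -> ~ exists c : I -> 'I_m, proper_coloring E c).

Definition dcycle (V : finType) (e : rel V) (s : seq V) :=
  s <> [::] /\ uniq s /\ cycle e s.

Definition acyclic_coloring (V : finType) (e : rel V) (k : nat) (c : V -> 'I_k) :=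
  forall s : seq V, dcycle e s -> ~ (forall x y, x \in s -> y \in s -> c x = c y).

Definition acyclic_chromatic_number (V : finType) (e : rel V) (k : nat) :=
  (exists c : V -> 'I_k, acyclic_coloring e c) /\
  (forall m, m < k -> ~ exists c : V -> 'I_m, acyclic_coloring e c).

Arguments backward_spine {V} e T r t i j.

(* Main.v *)
Require Import Defs.
From mathcomp Require Import all_boot.
From Stdlib Require Import Relations.
Set Implicit Arguments. Unset Strict Implicit. Unset Printing Implicit Defensive.

Lemma index_cons' (T : eqType) (x y : T) s :
  index x (y :: s) = if y == x then 0 else (index x s).+1.
Proof. by []. Qed.

Section Aux.
Variable V : finType.
Variable e : rel V.
Hypothesis eirr : irreflexive e.
Variable r : V.

Lemma connect_mono (A A' : {set V * V}) x y : A \subset A' ->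
  connect (tarc A) x y -> connect (tarc A') x y.
Proof.
move=> sAA'; apply: connect_sub => a b ab; apply: connect1.
by rewrite /tarc (subsetP sAA').
Qed.

Definition Inv (st : dfs_state V) : Prop :=
  let: (stk, vis, A) := st in
  exists F : seq V,
  uniq (stk ++ F) /\
  (forall x, (x \in vis) = (x \in stk ++ F)) /\
  sorted (fun a b => connect (tarc A) b a) stk /\
  (forall x, x \in vis -> connect (tarc A) r x) /\
  (forall x y, x \in F -> e x y -> y \in vis) /\
  (forall x y, x \in F -> e x y ->
     connect (tarc A) y x \/ (y \in F /\ index x F < index y F)) /\
  r \in vis.

Lemma Inv_step s1 s2 : dfs_step e s1 s2 -> Inv s1 -> Inv s2.
Proof.
case=> [u s vis A w euw wvis | u s vis A hall].
- case=> F [Hu [Hv [Hs [Hr [Hc [Hf Hrv]]]]]].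
  have sA : A \subset (u, w) |: A by apply: subsetUr.
  have mono := fun x y => @connect_mono A _ x y sA.
  have wF : w \notin u :: s ++ F by rewrite -Hv.
  have uv : u \in vis by rewrite Hv /= mem_head.
  exists F; split; [|split; [|split; [|split; [|split; [|split]]]]].
  + by rewrite /= wF; exact: Hu.
  + by move=> x; rewrite in_setU1 Hv !cat_cons in_cons.
  + rewrite /=; apply/andP; split.
      by apply: connect1; rewrite /tarc setU11.
    by apply: sub_path Hs => a b /=; exact: mono.
  + move=> x; rewrite in_setU1 => /predU1P [->|xv]; last exact: mono (Hr _ xv).
    apply: connect_trans (mono _ _ (Hr u uv)) _.
    by apply: connect1; rewrite /tarc setU11.
  + by move=> x y xF exy; rewrite in_setU1 (Hc x y xF exy) orbT.
  + move=> x y xF exy; case: (Hf x y xF exy) => [h|h]; [left; exact: mono|by right].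
  + by rewrite in_setU1 Hrv orbT.
- case=> F [Hu [Hv [Hs [Hr [Hc [Hf Hrv]]]]]].
  have P : perm_eq (u :: s ++ F) (s ++ u :: F).
    by rewrite -cat1s perm_catCA.
  have uF : u \notin F.
    by move: Hu; rewrite /= mem_cat negb_or => /andP [/andP [_ ->]].
  have trR : ssrbool.transitive (fun a b => connect (tarc A) b a).
    by move=> b a c /= h1 h2; exact: connect_trans h2 h1.
  exists (u :: F); split; [|split; [|split; [|split; [|split; [|split]]]]].
  + by rewrite -(perm_uniq P).
  + by move=> x; rewrite Hv (perm_mem P).
  + exact: path_sorted Hs.
  + exact: Hr.
  + move=> x y; rewrite in_cons => /predU1P [->|xF]; [exact: hall| exact: Hc].
  + move=> x y; rewrite in_cons => /predU1P [->|xF] exy.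
    * have wv := hall y exy.
      rewrite Hv /= in_cons mem_cat in wv.
      case/orP: wv => [/eqP yu|/orP [ys|yF]].
        by rewrite yu eirr in exy.
      left; have := order_path_min trR Hs.
      by move/allP/(_ y ys).
    right; split; first by rewrite in_cons yF orbT.
    have uy : (u == y) = false.
      by apply/negbTE; apply: contraNneq uF => ->.
    by rewrite !index_cons' eqxx uy.
    * case: (Hf x y xF exy) => [h|[yF lt]]; [by left|right].
      have ux : (u == x) = false by apply/negbTE; apply: contraNneq uF => ->.
      have uy : (u == y) = false by apply/negbTE; apply: contraNneq uF => ->.
      split; first by rewrite in_cons yF orbT.
      by rewrite !index_cons' ux uy ltnS.
  + exact: Hrv.
Qed.

Lemma Inv_rt s1 s2 : clos_refl_trans _ (@dfs_step V e) s1 s2 -> Inv s1 -> Inv s2.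
Proof. induction 1; eauto using Inv_step. Qed.

Lemma dfs_final (T : {set V * V}) : strongly_connected e -> dfs_tree e r T ->
  exists F : seq V, (forall x, x \in F) /\ (forall x, connect (tarc T) r x) /\
   (forall x y, e x y -> connect (tarc T) y x \/ index x F < index y F).
Proof.
move=> sc [vis rt].
have I0 : Inv ([:: r], [set r], set0).
  exists [::]; split; [done|split; [|split; [done|split; [|split; [done|split; [done|]]]]]].
  + by move=> x; rewrite in_set1 in_cons orbF.
  + by move=> x; rewrite in_set1 => /eqP ->; exact: connect0.
  + by rewrite in_set1.
case: (Inv_rt rt I0) => F [Hu [Hv [_ [Hr [Hc [Hf Hrv]]]]]].
have Hv' : forall x, (x \in vis) = (x \in F) by move=> x; rewrite Hv.
have clos : forall a b, a \in F -> e a b -> b \in F.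
  by move=> a b aF ab; rewrite -Hv'; exact: Hc ab.
have allF : forall x, x \in F.
  move=> x; have /connectP [p pth ->] := sc r x.
  have rF : r \in F by rewrite -Hv'.
  elim: p r rF pth => [|y p IH] a aF //= /andP [ay pth].
  exact: IH (clos _ _ aF ay) pth.
exists F; split; first done; split.
  by move=> x; apply: Hr; rewrite Hv'.
move=> x y exy; case: (Hf x y (allF x) exy) => [h|[_ h]]; by [left|right].
Qed.

End Aux.

Theorem mainTheorem9 (V : finType) (e : rel V) (r : V) (T : {set V * V})
  (t k : nat) (c' : 'I_t.+1 -> 'I_k) (c : V -> 'I_k) :
  loopless e -> strongly_connected e -> dfs_tree e r T ->
  tree_length T t -> 1 <= t ->
  chromatic_number (backward_spine e T r t) k ->
  proper_coloring (backward_spine e T r t) c' ->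
  (forall (v : V) (i : 'I_t.+1), in_level T r i v -> c v = c' i) ->
  acyclic_coloring e c /\
  (forall kA, acyclic_chromatic_number e kA -> kA <= k).
Proof.
move=> eirr sc dfs [_ tlen] t1 chi propc hc.
have [F [allF [reach arcs]]] := dfs_final eirr sc dfs.
have key : forall x y, e x y -> c x = c y -> index x F < index y F.
  move=> x y exy cxy; case: (arcs x y exy) => // hyx; exfalso.
  have /connectP [p pp yp] := reach y.
  have /connectP [q pq xq] := hyx.
  have qn : 0 < size q.
    case: q pq xq => [|z q] //= _ xy.
    by rewrite xy eirr in exy.
  have pc : path (tarc T) r (p ++ q) by rewrite cat_path pp -yp pq.
  have lc : last r (p ++ q) = x by rewrite last_cat -yp xq.
  have hi : size (p ++ q) < t.+1 by rewrite ltnS; exact: tlen pc.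
  have hj : size p < t.+1 by rewrite ltnS; exact: tlen pp.
  have Li : in_level T r (Ordinal hi) x by exists (p ++ q).
  have Lj : in_level T r (Ordinal hj) y by exists p; rewrite -yp.
  apply: (propc (Ordinal hi) (Ordinal hj)).
  + exists x, y; split; first by split.
    left; split; last by split.
    by rewrite /= size_cat -[X in X < _]addn0 ltn_add2l.
  + by rewrite -(hc x _ Li) -(hc y _ Lj).
have acyc : acyclic_coloring e c.
  move=> s [sn [_ cyc]] allc.
  case: s sn cyc allc => [//|x0 s] _ cyc allc.
  have pth : path (fun a b => index a F < index b F) x0 (rcons s x0).
    apply: (@sub_in_path _ (mem (x0 :: s)) e) cyc; last first.
      apply/allP => z; rewrite in_cons mem_rcons; case/orP=> [/eqP->|//]; exact: mem_head.
    move=> a b ain bin eab; apply: (key a b eab).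
    by rewrite (allc a x0 ain (mem_head _ _)) (allc b x0 bin (mem_head _ _)).
  have trR : ssrbool.transitive (fun a b => index a F < index b F).
    by move=> b a d /= h1 h2; exact: ltn_trans h1 h2.
  have := order_path_min trR pth.
  move/allP/(_ x0); rewrite mem_rcons mem_head /= ltnn; by move/(_ isT).
split=> // kA [_ hmin]; rewrite leqNgt; apply/negP => lt.
by apply: (hmin k lt); exists c.
Qed.
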